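(* There exists a non-commutative bilinear algorithm that multiplies two $9\times 9$ matrices using $\langle 6,6,6\rangle+3\,\langle 6,6,3\rangle+3\,\langle 6,3,3\rangle$ multiplications. In particular, $$\langle 9,9,9\rangle\leq\langle 6,6,6\rangle+3\,\langle 6,6,3\rangle+3\,\langle 6,3,3\rangle .$$
   Context: Fix a field $\mathbb{K}$. A non-commutative bilinear algorithm for multiplying an $a\times b$ matrix $A$ by a $b\times c$ matrix $B$ using $r$ multiplications consists of $r$ products $t_k=\big(\sum_{i,j}\alpha^{(k)}_{ij}a_{ij}\big)\big(\sum_{j,l}\beta^{(k)}_{jl}b_{jl}\big)$ with scalars in $\mathbb{K}$, together with scalars $\gamma^{(k)}_{il}\in\mathbb{K}$ such that $(AB)_{il}=\sum_k\gamma^{(k)}_{il}t_k$ for all $i,l$. This identity must hold when the entries lie in an arbitrary, not necessarily commutative, associative $\mathbb{K}$-algebra. The quantity $\langle a,b,c\rangle$ denotes the minimal such $r$, i.e. the tensor rank of the matrix multiplication tensor of format $(a,b,c)$. *)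

(* Defs.v *)
From HB Require Import structures.
From mathcomp Require Import all_boot all_order all_algebra.
Set Implicit Arguments. Unset Strict Implicit. Unset Printing Implicit Defensive.
Import GRing.Theory.
Local Open Scope ring_scope.

(* The identity is required to hold
   for entries in an arbitrary associative K-algebra (not necessarily
   commutative), exactly as in the definition of the paper. *)
Definition bilinear_alg (K : fieldType) (a b c r : nat)
  (alpha : 'I_r -> 'I_a -> 'I_b -> K)
  (beta  : 'I_r -> 'I_b -> 'I_c -> K)
  (gamma : 'I_r -> 'I_a -> 'I_c -> K) : Prop :=
  forall (A : algType K) (x : 'I_a -> 'I_b -> A) (y : 'I_b -> 'I_c -> A)
         (i : 'I_a) (l : 'I_c),
    \sum_(j < b) x i j * y j l =
    \sum_(k < r) gamma k i l *:
       ((\sum_(i' < a) \sum_(j < b) alpha k i' j *: x i' j) *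
        (\sum_(j < b) \sum_(l' < c) beta k j l' *: y j l')).

Definition has_bilinear_alg (K : fieldType) (a b c r : nat) : Prop :=
  exists alpha beta gamma, @bilinear_alg K a b c r alpha beta gamma.

Definition is_mm_rank (K : fieldType) (a b c r : nat) : Prop :=
  has_bilinear_alg K a b c r /\
  forall r', has_bilinear_alg K a b c r' -> (r <= r')%N.

(* Main.v *)
From HB Require Import structures.
Require Import Defs.
From mathcomp Require Import all_boot all_order all_algebra.
From mathcomp Require Import ring zify.
Set Implicit Arguments. Unset Strict Implicit. Unset Printing Implicit Defensive.
Import GRing.Theory.
Local Open Scope ring_scope.

Definition emb (b : bool) (o O : nat) : int :=
  if b then ((O == 2)%N && (o == 0)%N)%:R else ((O == o)%N && (O < 2)%N)%:R.
Definition coef (u : bool -> bool -> int) (o1 o2 O1 O2 : nat) : int :=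
  u false false * emb false o1 O1 * emb false o2 O2 +
  u false true * emb false o1 O1 * emb true o2 O2 +
  u true false * emb true o1 O1 * emb false o2 O2 +
  u true true * emb true o1 O1 * emb true o2 O2.
Definition mk (x00 x01 x10 x11 : int) : bool -> bool -> int :=
  fun b1 b2 => if b1 then (if b2 then x11 else x10) else (if b2 then x01 else x00).
Definition fsum (n : nat) (f : nat -> int) : int :=
  foldr (fun i acc => f i + acc) 0 (iota 0 n).
Definition OUTk (u v w : bool -> bool -> int) (p q s : nat) (a b c d e f : nat) : int :=
  fsum p (fun o1 => fsum q (fun o2 => fsum s (fun o3 =>
    coef w o1 o3 e f * coef u o1 o2 a b * coef v o2 o3 c d))).

Definition u1 := mk 1 0 0 1. Definition v1 := mk 1 0 0 1. Definition w1 := mk 1 0 0 1.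
Definition u2 := mk 0 0 1 1. Definition v2 := mk 1 0 0 0. Definition w2 := mk 0 0 1 (-1).
Definition u3 := mk 1 0 0 0. Definition v3 := mk 0 1 0 (-1). Definition w3 := mk 0 1 0 1.
Definition u4 := mk 0 0 0 1. Definition v4 := mk (-1) 0 1 0. Definition w4 := mk 1 0 1 0.
Definition u5 := mk 1 1 0 0. Definition v5 := mk 0 0 0 1. Definition w5 := mk (-1) 1 0 0.
Definition u6 := mk (-1) 0 1 0. Definition v6 := mk 1 1 0 0. Definition w6 := mk 0 0 0 1.
Definition u7 := mk 0 1 0 (-1). Definition v7 := mk 0 0 1 1. Definition w7 := mk 1 0 0 0.

Definition OUT a b c d e f : int :=
  OUTk u1 v1 w1 2 2 2 a b c d e f + (OUTk u2 v2 w2 1 2 2 a b c d e f +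
  (OUTk u3 v3 w3 2 2 1 a b c d e f + (OUTk u4 v4 w4 1 1 2 a b c d e f +
  (OUTk u5 v5 w5 2 1 1 a b c d e f + (OUTk u6 v6 w6 1 2 1 a b c d e f +
   OUTk u7 v7 w7 2 1 2 a b c d e f))))).

Definition outer_check : bool :=
  all (fun a => all (fun b => all (fun c => all (fun d => all (fun e => all (fun f =>
    OUT a b c d e f == ((e == a)%N && (b == c)%N && (f == d)%N)%:R)
   (iota 0 3)) (iota 0 3)) (iota 0 3)) (iota 0 3)) (iota 0 3)) (iota 0 3).

Lemma outer_ok : outer_check. Proof. vm_compute. reflexivity. Qed.

Section T.
Variable K : fieldType.

Definition dlt (T : eqType) (x y : T) : K := (x == y)%:R.

Definition tens a b c r (al : 'I_r -> 'I_a -> 'I_b -> K)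
  (be : 'I_r -> 'I_b -> 'I_c -> K) (ga : 'I_r -> 'I_a -> 'I_c -> K)
  i0 j0 j1 l1 i l := \sum_(k < r) ga k i l * al k i0 j0 * be k j1 l1.

Definition good a b c r al be ga := forall i0 j0 j1 l1 i l,
  @tens a b c r al be ga i0 j0 j1 l1 i l = dlt i i0 * dlt j0 j1 * dlt l l1.

Lemma dltC (T : eqType) (x y : T) : dlt x y = dlt y x.
Proof. by rewrite /dlt eq_sym. Qed.

Lemma sum_dltZ (A : lmodType K) n (a : 'I_n) (F : 'I_n -> A) :
  \sum_(i < n) dlt a i *: F i = F a.
Proof.
rewrite (bigD1 a) //= /dlt eqxx scale1r big1 ?addr0 // => i /negbTE.
by rewrite eq_sym => ->; rewrite scale0r.
Qed.

Lemma sum_dlt n (a : 'I_n) (F : 'I_n -> K) :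
  \sum_(i < n) dlt a i * F i = F a.
Proof. exact: (@sum_dltZ K^o). Qed.

Lemma alg_good a b c r al be ga :
  @bilinear_alg K a b c r al be ga -> good al be ga.
Proof.
move=> H i0 j0 j1 l1 i l.
have /= := H K^o (fun i' j => dlt i0 i' * dlt j0 j) (fun j l' => dlt j1 j * dlt l1 l') i l.
have E1 k : \sum_(i' < a) \sum_(j < b) al k i' j *: ((dlt i0 i' * dlt j0 j : K^o)) = al k i0 j0.
  rewrite -(sum_dlt i0 (fun i' => al k i' j0)); apply: eq_bigr => i' _.
  rewrite -(sum_dlt j0 (fun j => al k i' j)) mulr_sumr; apply: eq_bigr => j _.
  by rewrite /GRing.scale /= mulrC -mulrA.
have E2 k : \sum_(j < b) \sum_(l' < c) be k j l' *: ((dlt j1 j * dlt l1 l' : K^o)) = be k j1 l1.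
  rewrite -(sum_dlt j1 (fun j => be k j l1)); apply: eq_bigr => j _.
  rewrite -(sum_dlt l1 (fun l' => be k j l')) mulr_sumr; apply: eq_bigr => l' _.
  by rewrite /GRing.scale /= mulrC -mulrA.
move=> HH.
have L1 : \sum_(j < b) (dlt i0 i * dlt j0 j) * (dlt j1 j * dlt l1 l) = dlt i i0 * dlt j0 j1 * dlt l l1 :> K.
  rewrite -[RHS]mulrA -(sum_dlt j0 (fun j => dlt j j1 * dlt l l1)) mulr_sumr.
  apply: eq_bigr => j _; rewrite !(dltC i) (dltC l) (dltC j j1) /=; ring.
rewrite -L1 HH /tens; apply: eq_bigr => k _.
by rewrite E1 E2 /GRing.scale /= mulrA.
Qed.

Lemma good_alg a b c r al be ga :
  @good a b c r al be ga -> bilinear_alg al be ga.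
Proof.
move=> G A x y i l.
have E k : ga k i l *: ((\sum_(i' < a) \sum_(j < b) al k i' j *: x i' j) *
        (\sum_(j < b) \sum_(l' < c) be k j l' *: y j l')) =
   \sum_(i' < a) \sum_(j < b) \sum_(j' < b) \sum_(l' < c)
      (ga k i l * al k i' j * be k j' l') *: (x i' j * y j' l').
  rewrite mulr_suml scaler_sumr; apply: eq_bigr => i' _.
  rewrite mulr_suml scaler_sumr; apply: eq_bigr => j _.
  rewrite mulr_sumr scaler_sumr; apply: eq_bigr => j' _.
  rewrite mulr_sumr scaler_sumr; apply: eq_bigr => l' _.
  by rewrite -scalerAl -scalerAr !scalerA.
transitivity (\sum_(k < r) \sum_(i' < a) \sum_(j < b) \sum_(j' < b) \sum_(l' < c)
      (ga k i l * al k i' j * be k j' l') *: (x i' j * y j' l')); last first.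
  by apply: eq_bigr => k _; rewrite E.
transitivity (\sum_(i' < a) \sum_(j < b) \sum_(j' < b) \sum_(l' < c)
   tens al be ga i' j j' l' i l *: (x i' j * y j' l')); last first.
  rewrite [RHS]exchange_big; apply: eq_bigr => i' _.
  rewrite [RHS]exchange_big; apply: eq_bigr => j _.
  rewrite [RHS]exchange_big; apply: eq_bigr => j' _.
  rewrite [RHS]exchange_big; apply: eq_bigr => l' _.
  by rewrite /tens scaler_suml.
symmetry.
transitivity (\sum_(i' < a) dlt i i' *: \sum_(j < b) x i' j * y j l); last by rewrite sum_dltZ.
apply: eq_bigr => i' _; rewrite scaler_sumr; apply: eq_bigr => j _.
transitivity (\sum_(j' < b) dlt j j' *: (dlt i i' *: (x i' j * y j' l))); last by rewrite sum_dltZ.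
apply: eq_bigr => j' _.
transitivity (\sum_(l' < c) dlt l l' *: (dlt j j' *: (dlt i i' *: (x i' j * y j' l'))));
  last by rewrite sum_dltZ.
apply: eq_bigr => l' _.
rewrite G !scalerA; congr (_ *: _); ring.
Qed.

Lemma good_cyc a b c r al be ga : @good a b c r al be ga ->
  @good b c a r (fun k u v => be k u v) (fun k u v => ga k v u) (fun k u v => al k v u).
Proof.
move=> G i0 j0 j1 l1 i l; have := G l i i0 j0 l1 j1.
rewrite /tens => E; rewrite (dltC l1) (dltC j1) in E.
transitivity (dlt l l1 * dlt i i0 * dlt j0 j1); last by ring.
rewrite -E; apply: eq_bigr => k _; ring.
Qed.

Definition catf (X : Type) r1 r2 (f1 : 'I_r1 -> X) (f2 : 'I_r2 -> X) (k : 'I_(r1 + r2)) : X :=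
  match split k with inl k1 => f1 k1 | inr k2 => f2 k2 end.

Lemma catf_l X r1 r2 f1 f2 k : @catf X r1 r2 f1 f2 (lshift r2 k) = f1 k.
Proof. by rewrite /catf (unsplitK (inl k)). Qed.
Lemma catf_r X r1 r2 f1 f2 k : @catf X r1 r2 f1 f2 (rshift r1 k) = f2 k.
Proof. by rewrite /catf (unsplitK (inr k)). Qed.

Lemma tens_cat a b c r1 r2 al1 be1 ga1 al2 be2 ga2 i0 j0 j1 l1 i l :
  @tens a b c (r1 + r2) (catf al1 al2) (catf be1 be2) (catf ga1 ga2) i0 j0 j1 l1 i l =
  @tens a b c r1 al1 be1 ga1 i0 j0 j1 l1 i l + @tens a b c r2 al2 be2 ga2 i0 j0 j1 l1 i l.
Proof. by rewrite /tens big_split_ord /=; congr (_ + _); apply: eq_bigr => k _; rewrite ?catf_l ?catf_r. Qed.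

Lemma prod3 (A1 A2 B1 B2 C1 C2 : finType)
  (f : A1 -> A2 -> K) (g : B1 -> B2 -> K) (h : C1 -> C2 -> K) :
  (\sum_a1 \sum_a2 f a1 a2) * (\sum_b1 \sum_b2 g b1 b2) * (\sum_c1 \sum_c2 h c1 c2) =
  \sum_a1 \sum_a2 \sum_b1 \sum_b2 \sum_c1 \sum_c2 f a1 a2 * (g b1 b2 * h c1 c2).
Proof.
rewrite -mulrA mulr_suml; apply: eq_bigr => a1 _.
rewrite mulr_suml; apply: eq_bigr => a2 _.
rewrite mulr_suml mulr_sumr; apply: eq_bigr => b1 _.
rewrite mulr_suml mulr_sumr; apply: eq_bigr => b2 _.
rewrite mulr_sumr mulr_sumr; apply: eq_bigr => c1 _.
rewrite mulr_sumr mulr_sumr; apply: eq_bigr => c2 _.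
by [].
Qed.

Lemma swap6 (R : nmodType) (T A1 A2 B1 B2 C1 C2 : finType)
  (F : T -> A1 -> A2 -> B1 -> B2 -> C1 -> C2 -> R) :
  \sum_t \sum_a1 \sum_a2 \sum_b1 \sum_b2 \sum_c1 \sum_c2 F t a1 a2 b1 b2 c1 c2 =
  \sum_a1 \sum_a2 \sum_b1 \sum_b2 \sum_c1 \sum_c2 \sum_t F t a1 a2 b1 b2 c1 c2.
Proof.
rewrite exchange_big; apply: eq_bigr => a1 _.
rewrite exchange_big; apply: eq_bigr => a2 _.
rewrite exchange_big; apply: eq_bigr => b1 _.
rewrite exchange_big; apply: eq_bigr => b2 _.
rewrite exchange_big; apply: eq_bigr => c1 _.
by rewrite exchange_big.
Qed.

Definition restr r a' b' a b (al : 'I_r -> 'I_a' -> 'I_b' -> K)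
  (Phi : 'I_a' -> 'I_b' -> 'I_a -> 'I_b -> K) : 'I_r -> 'I_a -> 'I_b -> K :=
  fun k I J => \sum_(i' < a') \sum_(j' < b') al k i' j' * Phi i' j' I J.

Lemma tens_restr a' b' c' a b c r al be ga Phi Psi Chi :
  @good a' b' c' r al be ga -> forall I0 J0 J1 L1 I L,
  @tens a b c r (restr al Phi) (restr be Psi) (restr ga Chi) I0 J0 J1 L1 I L =
  \sum_(i' < a') \sum_(j' < b') \sum_(l' < c')
     Chi i' l' I L * Phi i' j' I0 J0 * Psi j' l' J1 L1.
Proof.
move=> G I0 J0 J1 L1 I L.
rewrite /tens /restr.
under eq_bigr do rewrite prod3.
rewrite swap6.
transitivity (\sum_(i' < a') \sum_(l' < c') \sum_(i0' < a') \sum_(j0' < b')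
   \sum_(j1' < b') \sum_(l1' < c') (dlt i' i0' * (dlt j0' j1' * (dlt l' l1' *
     (Chi i' l' I L * Phi i0' j0' I0 J0 * Psi j1' l1' J1 L1))))).
  do 6 (apply: eq_bigr => ? _).
  rewrite mulrA mulrA -G /tens mulr_suml; apply: eq_bigr => k _.
  move: (ga _ _ _) (Chi _ _ _ _) (al _ _ _) (Phi _ _ _ _) (be _ _ _) (Psi _ _ _ _) => g1 g2 g3 g4 g5 g6; ring.
transitivity (\sum_(i' < a') \sum_(l' < c') \sum_(i0' < a') \sum_(j0' < b')
   \sum_(j1' < b') (dlt i' i0' * (dlt j0' j1' *
     (Chi i' l' I L * Phi i0' j0' I0 J0 * Psi j1' l' J1 L1)))).
  do 5 (apply: eq_bigr => ? _).
  by rewrite -mulr_sumr -mulr_sumr sum_dlt.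
transitivity (\sum_(i' < a') \sum_(l' < c') \sum_(i0' < a') \sum_(j0' < b')
   (dlt i' i0' * (Chi i' l' I L * Phi i0' j0' I0 J0 * Psi j0' l' J1 L1))).
  do 4 (apply: eq_bigr => ? _).
  by rewrite -mulr_sumr sum_dlt.
transitivity (\sum_(i' < a') \sum_(l' < c') \sum_(j0' < b')
   (Chi i' l' I L * Phi i' j0' I0 J0 * Psi j0' l' J1 L1)).
  do 2 (apply: eq_bigr => ? _).
  under eq_bigr do rewrite -mulr_sumr.
  by rewrite sum_dlt.
by apply: eq_bigr => i' _; rewrite exchange_big.
Qed.
Definition dn (x y : nat) : K := (x == y)%:R.
Definition pmap (u : bool -> bool -> int) (i' j' I J : nat) : K :=
  dn (i' %% 3) (I %% 3) * dn (j' %% 3) (J %% 3) * (coef u (i' %/ 3) (j' %/ 3) (I %/ 3) (J %/ 3))%:~R.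

Lemma split3 p (F : nat -> K) : \sum_(i < (p * 3)%N) F i = \sum_(o < p) \sum_(t < 3) F (o * 3 + t)%N.
Proof.
elim: p F => [|p IH] F; first by rewrite !big_ord0.
rewrite [RHS]big_ord_recr /= -IH -!(big_mkord xpredT F).
have -> : (p.+1 * 3 = (p * 3).+3)%N by rewrite mulSn addnC !addnS addn0.
rewrite !big_nat_recr //= !big_ord_recr big_ord0 /= add0r addn0 !addrA.
by rewrite addn1 addn2.
Qed.

Lemma pmapE u o1 (t1 : 'I_3) o2 (t2 : 'I_3) I J :
  pmap u (o1 * 3 + t1)%N (o2 * 3 + t2)%N I J =
  dn t1 (I %% 3) * dn t2 (J %% 3) * (coef u o1 o2 (I %/ 3) (J %/ 3))%:~R.
Proof.
have h (o : nat) (t : 'I_3) : ((o * 3 + t) %/ 3 = o)%N /\ ((o * 3 + t) %% 3 = t)%N.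
  by rewrite divnMDl // modnMDl divn_small ?modn_small ?addn0.
by rewrite /pmap !(proj1 (h _ _)) !(proj2 (h _ _)).
Qed.

Lemma piece_eval p q s u v w I0 J0 J1 L1 I L :
  \sum_(i' < (p * 3)%N) \sum_(j' < (q * 3)%N) \sum_(l' < (s * 3)%N)
    pmap w i' l' I L * pmap u i' j' I0 J0 * pmap v j' l' J1 L1 =
  \sum_(o1 < p) \sum_(t1 < 3) \sum_(o2 < q) \sum_(t2 < 3) \sum_(o3 < s) \sum_(t3 < 3)
   (dn t1 (I %% 3) * dn t1 (I0 %% 3)) * ((dn t2 (J0 %% 3) * dn t2 (J1 %% 3)) *
   ((dn t3 (L %% 3) * dn t3 (L1 %% 3)) *
   (coef w o1 o3 (I %/ 3) (L %/ 3) * coef u o1 o2 (I0 %/ 3) (J0 %/ 3) * coef v o2 o3 (J1 %/ 3) (L1 %/ 3))%:~R)).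
Proof.
rewrite (split3 p (fun n => \sum_(j' < (q * 3)%N) \sum_(l' < (s * 3)%N)
   pmap w n l' I L * pmap u n j' I0 J0 * pmap v j' l' J1 L1)).
apply: eq_bigr => o1 _; apply: eq_bigr => t1 _ /=.
rewrite (split3 q (fun n => \sum_(l' < (s * 3)%N)
   pmap w (o1 * 3 + t1)%N l' I L * pmap u (o1 * 3 + t1)%N n I0 J0 * pmap v n l' J1 L1)).
apply: eq_bigr => o2 _; apply: eq_bigr => t2 _ /=.
rewrite (split3 s (fun n =>
   pmap w (o1 * 3 + t1)%N n I L * pmap u (o1 * 3 + t1)%N (o2 * 3 + t2)%N I0 J0 * pmap v (o2 * 3 + t2)%N n J1 L1)).
apply: eq_bigr => o3 _; apply: eq_bigr => t3 _ /=.
rewrite !pmapE !intrM; ring.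
Qed.

Lemma sum_fact p q s (D1 D2 D3 : 'I_3 -> K) (G : 'I_p -> 'I_q -> 'I_s -> K) :
  \sum_(o1 < p) \sum_(t1 < 3) \sum_(o2 < q) \sum_(t2 < 3) \sum_(o3 < s) \sum_(t3 < 3)
    D1 t1 * (D2 t2 * (D3 t3 * G o1 o2 o3)) =
  (\sum_(t < 3) D1 t) * ((\sum_(t < 3) D2 t) * ((\sum_(t < 3) D3 t) *
    \sum_(o1 < p) \sum_(o2 < q) \sum_(o3 < s) G o1 o2 o3)).
Proof.
under eq_bigr => o1 _ do under eq_bigr => t1 _ do under eq_bigr => o2 _ do
  under eq_bigr => t2 _ do under eq_bigr => o3 _ do
  rewrite -mulr_sumr -mulr_sumr -mulr_suml.
under eq_bigr => o1 _ do under eq_bigr => t1 _ do under eq_bigr => o2 _ do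
  under eq_bigr => t2 _ do rewrite -mulr_sumr -mulr_sumr -mulr_sumr.
under eq_bigr => o1 _ do under eq_bigr => t1 _ do under eq_bigr => o2 _ do
  rewrite -mulr_sumr -mulr_suml.
under eq_bigr => o1 _ do under eq_bigr => t1 _ do
  rewrite -mulr_sumr -mulr_sumr -mulr_sumr.
under eq_bigr => o1 _ do rewrite -mulr_suml.
by rewrite -mulr_sumr -mulr_sumr -mulr_sumr.
Qed.

Lemma dsum a b : (a < 3)%N -> \sum_(t < 3) dn t a * dn t b = dn a b.
Proof.
by move: a => [|[|[|a]]] // _; rewrite !big_ord_recr big_ord0 /= /dn /= !mul0r !mul1r ?add0r ?addr0.
Qed.

Lemma fsum_seq (f : nat -> int) (l : seq nat) :
  (foldr (fun i acc => f i + acc) 0 l)%:~R = \sum_(i <- l) (f i)%:~R :> K.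
Proof. elim: l => [|x l IH]; first by rewrite big_nil. by rewrite big_cons /= intrD IH. Qed.

Lemma fsumE (f : nat -> int) n : (fsum n f)%:~R = \sum_(i < n) (f i)%:~R :> K.
Proof. by rewrite /fsum fsum_seq -(big_mkord xpredT (fun i => (f i)%:~R)) /index_iota subn0. Qed.

Lemma piece_val p q s u v w I0 J0 J1 L1 I L :
  \sum_(i' < (p * 3)%N) \sum_(j' < (q * 3)%N) \sum_(l' < (s * 3)%N)
    pmap w i' l' I L * pmap u i' j' I0 J0 * pmap v j' l' J1 L1 =
  dn (I %% 3) (I0 %% 3) * (dn (J0 %% 3) (J1 %% 3) * (dn (L %% 3) (L1 %% 3) *
  (OUTk u v w p q s (I0 %/ 3) (J0 %/ 3) (J1 %/ 3) (L1 %/ 3) (I %/ 3) (L %/ 3))%:~R)).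
Proof.
rewrite piece_eval.
rewrite (sum_fact (fun t => dn t (I %% 3) * dn t (I0 %% 3)) (fun t => dn t (J0 %% 3) * dn t (J1 %% 3))
  (fun t => dn t (L %% 3) * dn t (L1 %% 3))
  (fun o1 o2 o3 => (coef w o1 o3 (I %/ 3) (L %/ 3) * coef u o1 o2 (I0 %/ 3) (J0 %/ 3) *
      coef v o2 o3 (J1 %/ 3) (L1 %/ 3))%:~R)).
rewrite !dsum ?ltn_pmod //; congr (_ * (_ * (_ * _))).
rewrite /OUTk fsumE; apply: eq_bigr => o1 _.
rewrite fsumE; apply: eq_bigr => o2 _.
by rewrite fsumE.
Qed.

Definition PM (m n : nat) (u : bool -> bool -> int) : 'I_m -> 'I_n -> 'I_9 -> 'I_9 -> K :=
  fun i' j' I J => pmap u i' j' I J.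

Lemma OUT_val a b c d e f : (a < 3)%N -> (b < 3)%N -> (c < 3)%N -> (d < 3)%N -> (e < 3)%N -> (f < 3)%N ->
  OUT a b c d e f = ((e == a) && (b == c) && (f == d))%:R.
Proof.
move=> ha hb hc hd he hf; have := outer_ok; rewrite /outer_check.
move=> /allP/(_ a); rewrite mem_iota ha => /(_ isT).
move=> /allP/(_ b); rewrite mem_iota hb => /(_ isT).
move=> /allP/(_ c); rewrite mem_iota hc => /(_ isT).
move=> /allP/(_ d); rewrite mem_iota hd => /(_ isT).
move=> /allP/(_ e); rewrite mem_iota he => /(_ isT).
by move=> /allP/(_ f); rewrite mem_iota hf => /(_ isT) /eqP.
Qed.

Lemma eq_divmod (m n : nat) : (m == n) = ((m %/ 3 == n %/ 3) && (m %% 3 == n %% 3))%N.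
Proof.
apply/eqP/andP => [-> //|[/eqP h1 /eqP h2]].
by rewrite (divn_eq m 3) (divn_eq n 3) h1 h2.
Qed.

Lemma final_eq (I0 J0 J1 L1 I L : 'I_9) :
  dn (I %% 3) (I0 %% 3) * (dn (J0 %% 3) (J1 %% 3) * (dn (L %% 3) (L1 %% 3) *
   (OUT (I0 %/ 3) (J0 %/ 3) (J1 %/ 3) (L1 %/ 3) (I %/ 3) (L %/ 3))%:~R)) =
  dlt I I0 * dlt J0 J1 * dlt L L1.
Proof.
have h (X : 'I_9) : (X %/ 3 < 3)%N by rewrite ltn_divLR.
rewrite OUT_val ?h // /dlt /dn -!val_eqE /= !(eq_divmod (nat_of_ord _)).
by do !case: (_ == _); rewrite /= ?mulr1 ?mulr0 ?mul1r ?mul0r.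
Qed.

Lemma comb7 r1 r2 r3 r4 r5 r6 r7 al1 be1 ga1 al2 be2 ga2 al3 be3 ga3 al4 be4 ga4
  al5 be5 ga5 al6 be6 ga6 al7 be7 ga7 :
  @good (2*3) (2*3) (2*3) r1 al1 be1 ga1 ->
  @good (1*3) (2*3) (2*3) r2 al2 be2 ga2 ->
  @good (2*3) (2*3) (1*3) r3 al3 be3 ga3 ->
  @good (1*3) (1*3) (2*3) r4 al4 be4 ga4 ->
  @good (2*3) (1*3) (1*3) r5 al5 be5 ga5 ->
  @good (1*3) (2*3) (1*3) r6 al6 be6 ga6 ->
  @good (2*3) (1*3) (2*3) r7 al7 be7 ga7 ->
  has_bilinear_alg K 9 9 9 (r1 + (r2 + (r3 + (r4 + (r5 + (r6 + r7))))))%N.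
Proof.
move=> g1 g2 g3 g4 g5 g6 g7.
exists (catf (restr al1 (PM u1)) (catf (restr al2 (PM u2)) (catf (restr al3 (PM u3))
  (catf (restr al4 (PM u4)) (catf (restr al5 (PM u5)) (catf (restr al6 (PM u6)) (restr al7 (PM u7)))))))).
exists (catf (restr be1 (PM v1)) (catf (restr be2 (PM v2)) (catf (restr be3 (PM v3))
  (catf (restr be4 (PM v4)) (catf (restr be5 (PM v5)) (catf (restr be6 (PM v6)) (restr be7 (PM v7)))))))).
exists (catf (restr ga1 (PM w1)) (catf (restr ga2 (PM w2)) (catf (restr ga3 (PM w3))
  (catf (restr ga4 (PM w4)) (catf (restr ga5 (PM w5)) (catf (restr ga6 (PM w6)) (restr ga7 (PM w7)))))))).
apply: good_alg => I0 J0 J1 L1 I L.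
rewrite !tens_cat (tens_restr _ _ _ g1) (tens_restr _ _ _ g2) (tens_restr _ _ _ g3)
  (tens_restr _ _ _ g4) (tens_restr _ _ _ g5) (tens_restr _ _ _ g6) (tens_restr _ _ _ g7).
rewrite /PM !piece_val -!mulrDr -!intrD.
exact: final_eq.
Qed.
End T.

Local Close Scope ring_scope.

Theorem lemma2 (K : fieldType) (r666 r663 r633 : nat) :
  is_mm_rank K 6 6 6 r666 ->
  is_mm_rank K 6 6 3 r663 ->
  is_mm_rank K 6 3 3 r633 ->
  has_bilinear_alg K 9 9 9 (r666 + 3 * r663 + 3 * r633) /\
  (forall r999, is_mm_rank K 9 9 9 r999 ->
     (r999 <= r666 + 3 * r663 + 3 * r633)%N).
Proof.
move=> [[a1 [b1 [c1 H1]]] _] [[a3 [b3 [c3 H3]]] _] [[a5 [b5 [c5 H5]]] _].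
suff HA : has_bilinear_alg K 9 9 9 (r666 + 3 * r663 + 3 * r633).
  by split => // r999 [_ /(_ _ HA)].
have g1 := alg_good H1.
have g3 := alg_good H3.
have g5 := alg_good H5.
have g7 := good_cyc g3.
have g2 := good_cyc g7.
have g4 := good_cyc g5.
have g6 := good_cyc g4.
have -> : (r666 + 3 * r663 + 3 * r633 = r666 + (r663 + (r663 + (r633 + (r633 + (r633 + r663))))))%N.
  lia.
exact: comb7 g1 g2 g3 g4 g5 g6 g7.
Qed.
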